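(* Let $R$ be a ring, $\mathcal{X}$ a class of left $R$-modules and $\mathcal{Y}$ a class of right $R$-modules. Suppose $\mathcal{GF}_{(\mathcal{X},\mathcal{Y})}(R)$ is closed under extensions. Then $\mathcal{GF}_{(\mathcal{X},\mathcal{Y})}(R)=\mathcal{GF}^{2}_{(\mathcal{X},\mathcal{Y})}(R)$.
   Context: An exact sequence $\mathbb{E}$ of left $R$-modules is $\mathcal{Y}\otimes_R-$ exact if $Y\otimes_R\mathbb{E}$ is exact for all $Y\in\mathcal{Y}$. A left $R$-module $M$ is Gorenstein $(\mathcal{X},\mathcal{Y})$-flat if there is a $\mathcal{Y}\otimes_R-$ exact exact sequence $\cdots\to X_1\to X_0\to X^0\to X^1\to\cdots$ of modules in $\mathcal{X}$ with $M\cong\ker(X^0\to X^1)$; $\mathcal{GF}_{(\mathcal{X},\mathcal{Y})}(R)$ is the class of these modules. $\mathcal{GF}^{2}_{(\mathcal{X},\mathcal{Y})}(R)$ is the class of left $R$-modules $M$ for which there is a $\mathcal{Y}\otimes_R-$ exact exact sequence $\cdots\to G_1\to G_0\to G^0\to G^1\to\cdots$ of modules in $\mathcal{GF}_{(\mathcal{X},\mathcal{Y})}(R)$ with $M\cong\ker(G^0\to G^1)$. *)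

(* Defs.v *)
From mathcomp Require Import all_boot all_order all_algebra.
Set Implicit Arguments. Unset Strict Implicit. Unset Printing Implicit Defensive.
Import GRing.Theory.
Local Open Scope ring_scope.

(* Left R-modules: lmodType R.  Right R-modules: lmodType R^c (left modules
   over the converse ring), where (r : R^c) *: y denotes y.r. *)

Section GFlat.
Variable R : pzRingType.

Definition balanced (Y : lmodType R^c) (M : lmodType R) (A : zmodType)
    (f : Y -> M -> A) : Prop :=
  [/\ forall y1 y2 m, f (y1 + y2) m = f y1 m + f y2 m,
      forall y m1 m2, f y (m1 + m2) = f y m1 + f y m2 &
      forall (r : R) y m, f ((r : R^c) *: y) m = f y (r *: m)].

(* Elements of Y (x)_R M are represented by formal sums sum_i y_i (x) m_i,
   i.e. sequences of pairs; two formal sums are equal in Y (x)_R M iff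
   every balanced map into every abelian group takes the same value on them
   (universal property of the tensor product). *)
Definition tens_eq (Y : lmodType R^c) (M : lmodType R)
    (s t : seq (Y * M)) : Prop :=
  forall (A : zmodType) (f : Y -> M -> A), balanced f ->
    \sum_(p <- s) f p.1 p.2 = \sum_(p <- t) f p.1 p.2.

Definition tens_map (Y : lmodType R^c) (M N : lmodType R) (d : M -> N)
    (s : seq (Y * M)) : seq (Y * N) := [seq (p.1, d p.2) | p <- s].

Definition complex_exact (C : int -> lmodType R)
    (d : forall n : int, {linear C n -> C (n + 1)}) : Prop :=
  forall (n : int) (x : C (n + 1)),
    d (n + 1) x = 0 <-> exists y : C n, d n y = x.

Definition tensor_exact (Y : lmodType R^c) (C : int -> lmodType R)
    (d : forall n : int, {linear C n -> C (n + 1)}) : Prop :=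
  forall (n : int) (t : seq (Y * C (n + 1))),
    tens_eq (tens_map (d (n + 1)) t) [::] <->
    exists s : seq (Y * C n), tens_eq (tens_map (d n) s) t.

Definition Ytensor_exact (Yc : lmodType R^c -> Prop) (C : int -> lmodType R)
    (d : forall n : int, {linear C n -> C (n + 1)}) : Prop :=
  forall Y, Yc Y -> tensor_exact Y d.

Definition GF_of (P : lmodType R -> Prop) (Yc : lmodType R^c -> Prop)
    (M : lmodType R) : Prop :=
  exists (C : int -> lmodType R) (d : forall n : int, {linear C n -> C (n + 1)}),
    [/\ forall n, P (C n), complex_exact d, Ytensor_exact Yc d &
        exists f : {linear M -> C 0}, injective f /\
          (forall x : C 0, d 0 x = 0 <-> exists m, f m = x)].

Definition GF (Xc : lmodType R -> Prop) (Yc : lmodType R^c -> Prop) :=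
  GF_of Xc Yc.
Definition GF2 (Xc : lmodType R -> Prop) (Yc : lmodType R^c -> Prop) :=
  GF_of (GF Xc Yc) Yc.

Definition closed_under_extensions (P : lmodType R -> Prop) : Prop :=
  forall (A B C : lmodType R) (f : {linear A -> B}) (g : {linear B -> C}),
    injective f -> (forall c, exists b, g b = c) ->
    (forall b, g b = 0 <-> exists a, f a = b) ->
    P A -> P C -> P B.
End GFlat.

(* Main.v *)
Require Import Defs.
From mathcomp Require Import all_boot all_order all_algebra.
From HB Require Import structures.
From mathcomp Require Import zify.
From Stdlib Require Import ClassicalEpsilon.
Set Implicit Arguments. Unset Strict Implicit. Unset Printing Implicit Defensive.
Import GRing.Theory.
Local Open Scope ring_scope.

Definition pb (P : Prop) : bool := if excluded_middle_informative P then true else false.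
Lemma pbP (P : Prop) : reflect P (pb P).
Proof. by rewrite /pb; case: excluded_middle_informative => H; constructor. Qed.

Definition mkLin (R : pzRingType) (U V : lmodType R) (f : U -> V)
  (H : linear f) : {linear U -> V} :=
  HB.pack_for {linear U -> V} f (GRing.isLinear.Build R U V *:%R f H).

Lemma mkLinE (R : pzRingType) (U V : lmodType R) (f : U -> V) (H : linear f) x :
  mkLin H x = f x.
Proof. by []. Qed.

Record subgrp (V : zmodType) := SubGrp {
  sgP :> V -> Prop; sg0 : sgP 0; sgB : forall x y, sgP x -> sgP y -> sgP (x - y) }.

Section ZQuot.
Variable (V : zmodType) (S : subgrp V).
Let S0 : S 0 := sg0 S.
Let SB : forall x y, S x -> S y -> S (x - y) := @sgB V S.

Lemma SN x : S x -> S (- x).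
Proof. by move=> Sx; rewrite -sub0r; apply: SB. Qed.
Lemma SD x y : S x -> S y -> S (x + y).
Proof. by move=> Sx Sy; rewrite -[y]opprK; apply: SB => //; apply: SN. Qed.

Definition zrep (x : V) : V := choose (fun y => pb (S (x - y))) x.
Lemma zrepP x : S (x - zrep x).
Proof. apply/pbP; apply: (@chooseP _ (fun y => pb (S (x - y)))); apply/pbP; by rewrite subrr. Qed.
Lemma zrep_eq x y : S (x - y) -> zrep x = zrep y.
Proof.
move=> Sxy; rewrite /zrep.
have E : (fun z => pb (S (x - z))) =1 (fun z => pb (S (y - z))).
  move=> z; apply/pbP/pbP => H.
    have -> : y - z = (x - z) - (x - y) by rewrite opprB addrCA addrAC subrr add0r.
    exact: SB.
  have -> : x - z = (x - y) + (y - z) by rewrite addrA subrK.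
  exact: SD.
rewrite (eq_choose E); apply: choose_id; apply/pbP; last by rewrite subrr.
by rewrite -opprB; apply: SN.
Qed.
Lemma zrep_idem x : zrep (zrep x) = zrep x.
Proof. apply: zrep_eq. rewrite -opprB. apply: SN. apply: zrepP. Qed.
Lemma zrep_eqP x y : zrep x = zrep y <-> S (x - y).
Proof.
split; last exact: zrep_eq.
move=> E. have := SB (zrepP x) (zrepP y). rewrite E.
by rewrite opprB addrA subrK.
Qed.

Definition zquot := {x : V | zrep x == x}.
HB.instance Definition _ := Choice.on zquot.
Definition zpi (x : V) : zquot := exist _ (zrep x) (introT eqP (zrep_idem x)).
Lemma zpiK (q : zquot) : zpi (val q) = q.
Proof. by apply: val_inj => /=; apply/eqP; case: q. Qed.
Lemma zpi_eq x y : zpi x = zpi y <-> S (x - y).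
Proof. split => [E|H]. apply/zrep_eqP. exact: (f_equal val E). by apply: val_inj; apply/zrep_eqP. Qed.
Lemma zpi_rep x : zpi (zrep x) = zpi x.
Proof. apply/zpi_eq. rewrite -opprB. apply: SN. apply: zrepP. Qed.

Definition zq0 := zpi 0.
Definition zqopp (q : zquot) := zpi (- val q).
Definition zqadd (q r : zquot) := zpi (val q + val r).
Lemma zpi_add x y : zqadd (zpi x) (zpi y) = zpi (x + y).
Proof.
apply/zpi_eq => /=.
have E : zrep x + zrep y - (x + y) = - ((x - zrep x) + (y - zrep y)).
  by rewrite [RHS]opprD !opprB opprD addrACA.
rewrite E; apply: SN; apply: SD; apply: zrepP.
Qed.
Lemma zpi_opp x : zqopp (zpi x) = zpi (- x).
Proof.
apply/zpi_eq => /=. rewrite opprK addrC. exact: zrepP.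
Qed.
Lemma zq_addA : associative zqadd.
Proof. move=> a b c; rewrite -(zpiK a) -(zpiK b) -(zpiK c) !zpi_add; by rewrite addrA. Qed.
Lemma zq_addC : commutative zqadd.
Proof. move=> a b; rewrite -(zpiK a) -(zpiK b) !zpi_add; by rewrite addrC. Qed.
Lemma zq_add0 : left_id zq0 zqadd.
Proof. move=> a; rewrite -(zpiK a) /zq0 !zpi_add; by rewrite add0r. Qed.
Lemma zq_addN : left_inverse zq0 zqopp zqadd.
Proof. move=> a; rewrite -(zpiK a) zpi_opp zpi_add; by rewrite addNr. Qed.
HB.instance Definition _ := GRing.isZmodule.Build zquot zq_addA zq_addC zq_add0 zq_addN.

Lemma zpiD x y : zpi (x + y) = zpi x + zpi y.
Proof. by rewrite -zpi_add. Qed.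
Lemma zpiN x : zpi (- x) = - zpi x.
Proof. by rewrite -zpi_opp. Qed.
Lemma zpi0 : zpi 0 = 0.
Proof. by []. Qed.
Lemma zpi_eq0 x : zpi x = 0 <-> S x.
Proof. rewrite -zpi0 zpi_eq subr0. done. Qed.
Lemma zpiB x y : zpi (x - y) = zpi x - zpi y.
Proof. by rewrite zpiD zpiN. Qed.
Lemma zpi_sum (I : Type) (s : seq I) (F : I -> V) : zpi (\sum_(i <- s) F i) = \sum_(i <- s) zpi (F i).
Proof. elim: s => [|a s IH]; rewrite ?big_nil ?big_cons //. by rewrite zpiD IH. Qed.
Lemma zpi_surj (q : zquot) : exists x, zpi x = q.
Proof. by exists (val q); apply: zpiK. Qed.
End ZQuot.

Record submod (R : pzRingType) (V : lmodType R) := SubMod {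
  smG :> subgrp V; smZ : forall (a : R) x, smG x -> smG (a *: x) }.

Section LQuot.
Variable (R : pzRingType) (V : lmodType R) (S : submod V).
Let S0 : S 0 := sg0 S.
Let SB : forall x y, S x -> S y -> S (x - y) := @sgB V S.
Let SZ : forall (a : R) x, S x -> S (a *: x) := @smZ R V S.
Definition lquot := zquot S.
HB.instance Definition _ := GRing.Zmodule.on lquot.
Definition lqscale (a : R) (q : lquot) : lquot := zpi S (a *: val q).
Lemma zpi_scale a x : lqscale a (zpi S x) = zpi S (a *: x).
Proof. apply/zpi_eq => /=. rewrite -scalerBr -opprB scalerN. apply: SN => //. apply: SZ. apply: zrepP. Qed.
Lemma lq_scaleA a b v : lqscale a (lqscale b v) = lqscale (a * b) v.
Proof. rewrite -(zpiK v) !zpi_scale. by rewrite scalerA. Qed.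
Lemma lq_scale1 : left_id 1 lqscale.
Proof. move=> v; rewrite -(zpiK v) !zpi_scale. by rewrite scale1r. Qed.
Lemma lq_scaleDr : right_distributive lqscale +%R.
Proof. move=> a u v; rewrite -(zpiK u) -(zpiK v) -zpiD !zpi_scale -zpiD. by rewrite scalerDr. Qed.
Lemma lq_scaleDl v : {morph lqscale^~ v: a b / a + b}.
Proof. move=> a b; rewrite -(zpiK v) !zpi_scale -zpiD. by rewrite scalerDl. Qed.
HB.instance Definition _ := GRing.Zmodule_isLmodule.Build R lquot lq_scaleA lq_scale1 lq_scaleDr lq_scaleDl.
Definition lpi_fun (x : V) : lquot := zpi S x.
Lemma lpi_lin : linear lpi_fun.
Proof. move=> a x y. rewrite /lpi_fun zpiD. congr (_ + _). by rewrite -zpi_scale. Qed.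
Definition lpi : {linear V -> lquot} := mkLin lpi_lin.
Lemma lpi_eq0 x : lpi x = 0 <-> S x.
Proof. exact: zpi_eq0. Qed.
Lemma lpi_surj (q : lquot) : exists x, lpi x = q.
Proof. exact: zpi_surj. Qed.
End LQuot.
Lemma pbT (P : Prop) : P -> pb P.
Proof. by move=> H; apply/pbP. Qed.
Lemma pbE (P : Prop) : pb P -> P.
Proof. by move/pbP. Qed.


Section Sub.
Variable (R : pzRingType) (V : lmodType R) (S : submod V).
Definition ssub := {x : V | pb (S x)}.
HB.instance Definition _ := Choice.on ssub.
Lemma ss0 : pb (S 0). Proof. apply: pbT; exact: sg0. Qed.
Lemma ssD (x y : ssub) : pb (S (val x + val y)).
Proof.
apply: pbT. case: x => x Hx; case: y => y Hy /=; move/pbE: Hx => Hx; move/pbE: Hy => Hy.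
rewrite -[y]opprK; apply: sgB => //. rewrite -sub0r; apply: sgB => //; exact: sg0.
Qed.
Lemma ssN (x : ssub) : pb (S (- val x)).
Proof. apply: pbT. case: x => x Hx /=; move/pbE: Hx => Hx. rewrite -sub0r; apply: sgB => //; exact: sg0. Qed.
Lemma ssZ a (x : ssub) : pb (S (a *: val x)).
Proof. apply: pbT. case: x => x Hx /=; move/pbE: Hx => Hx. exact: smZ. Qed.
Definition ss_zero : ssub := @exist V (fun z => pb (S z)) 0 ss0.
Definition ss_add (x y : ssub) : ssub := @exist V (fun z => pb (S z)) _ (ssD x y).
Definition ss_opp (x : ssub) : ssub := @exist V (fun z => pb (S z)) _ (ssN x).
Definition ss_scale a (x : ssub) : ssub := @exist V (fun z => pb (S z)) _ (ssZ a x).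
Lemma ss_addA : associative ss_add. Proof. by move=> *; apply: val_inj; rewrite /= addrA. Qed.
Lemma ss_addC : commutative ss_add. Proof. by move=> *; apply: val_inj; rewrite /= addrC. Qed.
Lemma ss_add0 : left_id ss_zero ss_add. Proof. by move=> *; apply: val_inj; rewrite /= add0r. Qed.
Lemma ss_addN : left_inverse ss_zero ss_opp ss_add. Proof. by move=> *; apply: val_inj; rewrite /= addNr. Qed.
HB.instance Definition _ := GRing.isZmodule.Build ssub ss_addA ss_addC ss_add0 ss_addN.
Lemma ss_scaleA a b v : ss_scale a (ss_scale b v) = ss_scale (a * b) v.
Proof. by apply: val_inj; rewrite /= scalerA. Qed.
Lemma ss_scale1 : left_id 1 ss_scale. Proof. by move=> *; apply: val_inj; rewrite /= scale1r. Qed.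
Lemma ss_scaleDr : right_distributive ss_scale +%R.
Proof. by move=> *; apply: val_inj; rewrite /= scalerDr. Qed.
Lemma ss_scaleDl v : {morph ss_scale^~ v: a b / a + b}.
Proof. by move=> *; apply: val_inj; rewrite /= scalerDl. Qed.
HB.instance Definition _ := GRing.Zmodule_isLmodule.Build R ssub ss_scaleA ss_scale1 ss_scaleDr ss_scaleDl.
Lemma ssval_lin : linear (fun x : ssub => val x).
Proof. by []. Qed.
Definition ssval : {linear ssub -> V} := mkLin ssval_lin.
Lemma ssval_inj : injective ssval. Proof. exact: val_inj. Qed.
Lemma ssval_im x : S x <-> exists y, ssval y = x.
Proof.
split => [Sx|[[y Hy] <-]]; last exact: pbE.
by exists (@exist V (fun z => pb (S z)) x (pbT Sx)).
Qed.
Definition ssin x (Sx : S x) : ssub := @exist V (fun z => pb (S z)) x (pbT Sx).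
Lemma ssinE x (Sx : S x) : ssval (ssin Sx) = x. Proof. by []. Qed.
End Sub.

Section Tens.
Variable R : pzRingType.
Implicit Types (Y : lmodType R^c).

Lemma bal_0l Y (M : lmodType R) (A : zmodType) (f : Y -> M -> A) : balanced f -> forall m, f 0 m = 0.
Proof. case=> H1 _ _ m. apply: (@addrI _ (f 0 m)); by rewrite addr0 -H1 addr0. Qed.
Lemma bal_0r Y (M : lmodType R) (A : zmodType) (f : Y -> M -> A) : balanced f -> forall y, f y 0 = 0.
Proof. case=> _ H2 _ y. apply: (@addrI _ (f y 0)); by rewrite addr0 -H2 addr0. Qed.
Lemma bal_Nl Y (M : lmodType R) (A : zmodType) (f : Y -> M -> A) : balanced f -> forall y m, f (- y) m = - f y m.
Proof.
move=> fb y m; have [H1 _ _] := fb. apply: (@addrI _ (f y m)).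
by rewrite -H1 !subrr bal_0l.
Qed.
Lemma bal_Nr Y (M : lmodType R) (A : zmodType) (f : Y -> M -> A) : balanced f -> forall y m, f y (- m) = - f y m.
Proof.
move=> fb y m; have [_ H2 _] := fb. apply: (@addrI _ (f y m)).
by rewrite -H2 !subrr bal_0r.
Qed.

Variables (Y : lmodType R^c).

Lemma te_refl (M : lmodType R) (s : seq (Y * M)) : tens_eq s s. Proof. by []. Qed.
Lemma te_sym (M : lmodType R) (s t : seq (Y * M)) : tens_eq s t -> tens_eq t s.
Proof. by move=> H A f fb; rewrite H. Qed.
Lemma te_trans (M : lmodType R) (s t u : seq (Y * M)) : tens_eq s t -> tens_eq t u -> tens_eq s u.
Proof. by move=> H1 H2 A f fb; rewrite H1 ?H2. Qed.
Lemma te_cat (M : lmodType R) (s s' t t' : seq (Y * M)) :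
  tens_eq s s' -> tens_eq t t' -> tens_eq (s ++ t) (s' ++ t').
Proof. by move=> H1 H2 A f fb; rewrite !big_cat /= H1 ?H2. Qed.

Definition tneg (M : lmodType R) (s : seq (Y * M)) : seq (Y * M) := [seq (- p.1, p.2) | p <- s].
Lemma tneg_sum (M : lmodType R) (A : zmodType) (f : Y -> M -> A) (s : seq (Y * M)) :
  balanced f -> \sum_(p <- tneg s) f p.1 p.2 = - \sum_(p <- s) f p.1 p.2.
Proof.
move=> fb; elim: s => [|a s IH]; rewrite ?big_nil ?oppr0 // /tneg map_cons !big_cons /=.
by rewrite -/(tneg s) IH opprD bal_Nl.
Qed.
Lemma te_neg (M : lmodType R) (s t : seq (Y * M)) : tens_eq s t -> tens_eq (tneg s) (tneg t).
Proof. by move=> H A f fb; rewrite !tneg_sum // H. Qed.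
Lemma te_negK (M : lmodType R) (s : seq (Y * M)) : tens_eq (tneg s ++ s) [::].
Proof. move=> A f fb; rewrite big_cat tneg_sum // big_nil; exact: addNr. Qed.

Lemma tens_map_cat (M N : lmodType R) (d : M -> N) s t : tens_map (Y:=Y) d (s ++ t) = tens_map d s ++ tens_map d t.
Proof. exact: map_cat. Qed.
Lemma tens_map_comp (M N P : lmodType R) (d : M -> N) (e : N -> P) s :
  tens_map (Y:=Y) e (tens_map d s) = tens_map (e \o d) s.
Proof. by rewrite /tens_map -map_comp. Qed.
Lemma tens_map_ext (M N : lmodType R) (d e : M -> N) s : d =1 e -> tens_map (Y:=Y) d s = tens_map e s.
Proof. by move=> E; apply: eq_map => p; rewrite E. Qed.
Lemma tens_map_neg (M N : lmodType R) (d : M -> N) s : tens_map (Y:=Y) d (tneg s) = tneg (tens_map d s).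
Proof. by rewrite /tens_map /tneg -!map_comp. Qed.
Lemma tens_map_id (M : lmodType R) s : tens_map (Y:=Y) (@id M) s = s.
Proof. by rewrite /tens_map -[RHS]map_id; apply: eq_map => -[]. Qed.

Lemma te_map (M N : lmodType R) (h : {linear M -> N}) (s t : seq (Y * M)) :
  tens_eq s t -> tens_eq (tens_map h s) (tens_map h t).
Proof.
move=> H A f fb. rewrite /tens_map !big_map /=.
have fb' : balanced (fun y m => f y (h m)).
  case: fb => H1 H2 H3; split => *; by rewrite ?H1 ?linearD ?H2 ?H3 ?linearZ.
exact: (H A _ fb').
Qed.

Lemma te_zero_map (M N : lmodType R) (h : M -> N) (s : seq (Y * M)) :
  (forall m, h m = 0) -> tens_eq (tens_map h s) [::].
Proof.
move=> H A f fb; rewrite big_nil /tens_map big_map big1 // => p _ /=. by rewrite H bal_0r.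
Qed.

Section TensT.
Variable (M : lmodType R).
Definition trep (s : seq (Y * M)) := choose (fun t => pb (tens_eq s t)) s.
Lemma trepP s : tens_eq s (trep s).
Proof. apply/pbP. apply: (@chooseP _ (fun t => pb (tens_eq s t))). by apply/pbP. Qed.
Lemma trep_eq s t : tens_eq s t -> trep s = trep t.
Proof.
move=> H; rewrite /trep.
have E : (fun u => pb (tens_eq s u)) =1 (fun u => pb (tens_eq t u)).
  move=> u; apply/pbP/pbP => H'; [exact: te_trans (te_sym H) H' | exact: te_trans H H'].
rewrite (eq_choose E); apply: choose_id; apply/pbP => //; exact: te_sym.
Qed.
Definition tensT := {s : seq (Y * M) | trep s == s}.
HB.instance Definition _ := Choice.on tensT.
End TensT.
End Tens.


Section TensT2.
Variable (R : pzRingType) (Y : lmodType R^c) (M : lmodType R).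
Local Notation tensT := (tensT Y M).
Lemma trep_idem (s : seq (Y * M)) : trep (trep s) == trep s.
Proof. apply/eqP; apply: trep_eq; apply: te_sym; exact: trepP. Qed.
Definition tpi (s : seq (Y * M)) : tensT := exist _ (trep s) (trep_idem s).
Lemma tpiK (q : tensT) : tpi (val q) = q.
Proof. by apply: val_inj => /=; apply/eqP; case: q. Qed.
Lemma tpi_eq s t : tpi s = tpi t <-> tens_eq s t.
Proof.
split => [E|H]; last by apply: val_inj; apply: trep_eq.
have E' := f_equal val E; rewrite /= in E'.
apply: te_trans (trepP s) _; rewrite E'; apply: te_sym; exact: trepP.
Qed.
Lemma tpi_rep s : tpi (trep s) = tpi s.
Proof. apply/tpi_eq; apply: te_sym; exact: trepP. Qed.
Definition tzero := tpi [::].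
Definition tadd (a b : tensT) := tpi (val a ++ val b).
Definition topp (a : tensT) := tpi (tneg (val a)).
Lemma tpi_add s t : tadd (tpi s) (tpi t) = tpi (s ++ t).
Proof. apply/tpi_eq; apply: te_cat; apply: te_sym; exact: trepP. Qed.
Lemma tpi_opp s : topp (tpi s) = tpi (tneg s).
Proof. apply/tpi_eq; apply: te_neg; apply: te_sym; exact: trepP. Qed.
Lemma t_addA : associative tadd.
Proof. move=> a b c; rewrite -(tpiK a) -(tpiK b) -(tpiK c) !tpi_add; by rewrite catA. Qed.
Lemma t_addC : commutative tadd.
Proof.
move=> a b; rewrite -(tpiK a) -(tpiK b) !tpi_add; apply/tpi_eq.
by move=> A f fb; rewrite !big_cat /= addrC.
Qed.
Lemma t_add0 : left_id tzero tadd.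
Proof. move=> a; rewrite -(tpiK a) /tzero tpi_add; by []. Qed.
Lemma t_addN : left_inverse tzero topp tadd.
Proof. move=> a; rewrite -(tpiK a) tpi_opp tpi_add; apply/tpi_eq; exact: te_negK. Qed.
HB.instance Definition _ := GRing.isZmodule.Build tensT t_addA t_addC t_add0 t_addN.
Lemma tpiD s t : tpi (s ++ t) = tpi s + tpi t. Proof. by rewrite -tpi_add. Qed.
Lemma tpiN s : tpi (tneg s) = - tpi s. Proof. by rewrite -tpi_opp. Qed.
Lemma tpi0 : tpi [::] = 0. Proof. by []. Qed.
Definition tiota (y : Y) (m : M) : tensT := tpi [:: (y, m)].
Lemma tiota_bal : balanced tiota.
Proof.
split => *; rewrite /tiota -?tpiD; apply/tpi_eq => A f [H1 H2 H3];
  rewrite !big_cons !big_nil /= ?addr0 ?H1 ?H2 ?H3 //.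
Qed.
Lemma tiota_sum s : \sum_(p <- s) tiota p.1 p.2 = tpi s.
Proof.
elim: s => [|a s IH]; rewrite ?big_nil ?big_cons // IH /tiota -tpiD.
by case: a.
Qed.
Lemma te_tpi s t : tens_eq s t <-> tpi s = tpi t.
Proof. by rewrite tpi_eq. Qed.
End TensT2.

Section RE.
Variable (R : pzRingType) (Y : lmodType R^c).
Variables (A B C : lmodType R) (f : {linear A -> B}) (g : {linear B -> C}).
Hypothesis gsurj : forall c, exists b, g b = c.
Hypothesis gker : forall b, g b = 0 -> exists a, f a = b.

Lemma tens_surj (u : seq (Y * C)) : exists t, tens_map g t = u.
Proof.
elim: u => [|[y c] u [t Ht]]; first by exists [::].
have [b Hb] := gsurj c. by exists ((y, b) :: t); rewrite /tens_map /= Hb -Ht.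
Qed.

Definition imS_fun (tau : tensT Y B) := exists s, tau = tpi (tens_map f s).
Lemma imS0 : imS_fun 0. Proof. by exists [::]. Qed.
Lemma imSB x y : imS_fun x -> imS_fun y -> imS_fun (x - y).
Proof.
move=> [s1 ->] [s2 ->]; exists (s1 ++ tneg s2).
by rewrite tens_map_cat tpiD tens_map_neg tpiN.
Qed.
Definition imS := SubGrp imS0 imSB.

Definition gi (c : C) : B := proj1_sig (constructive_indefinite_description _ (gsurj c)).
Lemma giK c : g (gi c) = c.
Proof. rewrite /gi; by case: constructive_indefinite_description. Qed.

Definition phi (y : Y) (c : C) : zquot imS := zpi imS (tiota y (gi c)).
Lemma tiota_subr (y : Y) (b1 b2 : B) : tiota y (b1 - b2) = tiota y b1 - tiota y b2.
Proof.
have [_ H2 _] := tiota_bal Y B.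
by rewrite -[b2]opprK -/(b1 - - (- b2)) opprK H2 (bal_Nr (tiota_bal Y B)).
Qed.
Lemma phi_g y b : phi y (g b) = zpi imS (tiota y b).
Proof.
apply/zpi_eq. rewrite -tiota_subr.
have [a Ha] : exists a, f a = gi (g b) - b by apply: gker; rewrite linearB /= giK subrr.
exists [:: (y, a)]. by rewrite /tiota /tens_map /= Ha.
Qed.
Lemma phi_bal : balanced phi.
Proof.
have [H1 H2 H3] := tiota_bal Y B.
split.
- by move=> y1 y2 c; rewrite /phi H1 zpiD.
- move=> y c1 c2. by rewrite -{1}(giK c1) -{1}(giK c2) -linearD phi_g H2 zpiD.
- move=> r y c. by rewrite -{2}(giK c) -linearZ phi_g /phi H3.
Qed.

Lemma tens_rexact (t : seq (Y * B)) :
  tens_eq (tens_map g t) [::] -> exists s, tens_eq (tens_map f s) t.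
Proof.
move=> H. have := H _ phi phi_bal. rewrite big_nil /tens_map big_map /=.
under eq_bigr => p _ do rewrite phi_g.
rewrite -zpi_sum tiota_sum => /zpi_eq0 [s Hs].
exists s. apply/te_tpi. by rewrite -Hs.
Qed.
End RE.


Section Gen.
Variable R : pzRingType.

Lemma lcomp_lin (A B C : lmodType R) (g : {linear B -> C}) (f : {linear A -> B}) : linear (fun x => g (f x)).
Proof. by move=> a x y; rewrite !linearP. Qed.
Definition lcomp (A B C : lmodType R) (g : {linear B -> C}) (f : {linear A -> B}) : {linear A -> C} :=
  mkLin (lcomp_lin g f).
Lemma lcompE (A B C : lmodType R) (g : {linear B -> C}) (f : {linear A -> B}) x : lcomp g f x = g (f x).
Proof. by []. Qed.

Definition ecast (E : int -> lmodType R) i j (e : i = j) (x : E i) : E j :=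
  match e in _ = j return E j with erefl => x end.
Arguments ecast E {i j} e x.
Lemma ecast_lin (E : int -> lmodType R) i j (e : i = j) : linear (ecast E e).
Proof. by case: j / e. Qed.
Arguments ecast_lin E {i j} e.
Definition ecastL (E : int -> lmodType R) i j (e : i = j) : {linear E i -> E j} := mkLin (ecast_lin E e).
Arguments ecastL E {i j} e.
Lemma ecast0 (E : int -> lmodType R) i j (e : i = j) (x : E i) : ecast E e x = 0 <-> x = 0.
Proof. by case: j / e. Qed.
Arguments ecast0 E {i j} e x.

Lemma te_mapf (Y : lmodType R^c) (M N : lmodType R) (h : M -> N) (hl : linear h) (s t : seq (Y * M)) :
  tens_eq s t -> tens_eq (tens_map h s) (tens_map h t).
Proof. exact: (@te_map R Y M N (mkLin hl)). Qed.

Lemma tens_ecast (Y : lmodType R^c) (E : int -> lmodType R) i j (e : i = j) (M : lmodType R) (h : M -> E i) t :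
  tens_eq (tens_map (Y:=Y) (fun x => ecast E e (h x)) t) [::] <-> tens_eq (tens_map h t) [::].
Proof. by case: j / e. Qed.

Lemma tens_ecast2 (Y : lmodType R^c) (E : int -> lmodType R) i j (e : i = j) (M : lmodType R) (h : M -> E i) s t :
  tens_eq (tens_map (Y:=Y) (fun x => ecast E e (h x)) s) t <-> tens_eq (tens_map h s) (tens_map (ecast E (esym e)) t).
Proof. case: j / e t => t /=. by rewrite tens_map_id. Qed.

Definition tinj (Yc : lmodType R^c -> Prop) (A B : lmodType R) (f : A -> B) :=
  forall Y, Yc Y -> forall s : seq (Y * A), tens_eq (tens_map f s) [::] -> tens_eq s [::].

Definition SES (A B C : lmodType R) (f : {linear A -> B}) (g : {linear B -> C}) :=
  [/\ injective f, (forall c, exists b, g b = c) & (forall b, g b = 0 <-> exists a, f a = b)].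

Definition pSES Yc (A B C : lmodType R) (f : {linear A -> B}) (g : {linear B -> C}) :=
  SES f g /\ tinj Yc f.

Definition Right Yc (P Q : lmodType R -> Prop) (M : lmodType R) :=
  exists (G N : lmodType R) (f : {linear M -> G}) (g : {linear G -> N}), [/\ pSES Yc f g, P G & Q N].
Definition Left Yc (P Q : lmodType R -> Prop) (M : lmodType R) :=
  exists (K G : lmodType R) (f : {linear K -> G}) (g : {linear G -> M}), [/\ pSES Yc f g, P G & Q K].

Section Splice.
Variables (G1 N2 G2 N3 G3 : lmodType R) (p1 : {linear G1 -> N2}) (i2 : {linear N2 -> G2})
  (p2 : {linear G2 -> N3}) (i3 : {linear N3 -> G3}).
Hypothesis p1s : forall n, exists g, p1 g = n.
Hypothesis p2s : forall n, exists g, p2 g = n.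
Hypothesis ex2 : forall g, p2 g = 0 <-> exists n, i2 n = g.
Hypothesis i3i : injective i3.

Lemma splice_ex (x : G2) : i3 (p2 x) = 0 <-> exists y, i2 (p1 y) = x.
Proof.
split.
- move=> H. have : p2 x = 0 by apply: i3i; rewrite H linear0.
  move/ex2 => [n <-]. have [g <-] := p1s n. by exists g.
- move=> [y <-]. have -> : p2 (i2 (p1 y)) = 0 by apply/ex2; eauto.
  exact: linear0.
Qed.

Lemma splice_tens (Y : lmodType R^c) (i3p : forall s : seq (Y * N3), tens_eq (tens_map i3 s) [::] -> tens_eq s [::])
  (t : seq (Y * G2)) :
  tens_eq (tens_map (fun x => i3 (p2 x)) t) [::] <-> exists s, tens_eq (tens_map (fun x => i2 (p1 x)) s) t.
Proof.
split.
- rewrite -(tens_map_comp p2 i3) => /i3p H.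
  have [u Hu] := tens_rexact p2s (fun b H => proj1 (ex2 b) H) H.
  have [s Hs] := tens_surj (Y:=Y) p1s u.
  exists s. by rewrite -(tens_map_comp p1 i2) Hs.
- move=> [s Hs].
  apply: te_trans (te_sym (te_mapf (lcomp_lin i3 p2) Hs)) _.
  rewrite tens_map_comp. apply: te_zero_map => m /=.
  have -> : p2 (i2 (p1 m)) = 0 by apply/ex2; eauto.
  exact: linear0.
Qed.
End Splice.

Section Transfer.
Variables (E : int -> lmodType R) (s : int -> int) (delta : forall m, {linear E m -> E (s m)}).
Variables (phi : int -> int) (e : forall n, s (phi n) = phi (n + 1)).
Definition dT n : {linear E (phi n) -> E (phi (n + 1))} := lcomp (ecastL E (e n)) (delta (phi n)).

Lemma transfer_exact :
  (forall m (x : E (s m)), delta (s m) x = 0 <-> exists y, delta m y = x) ->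
  complex_exact (C := fun n => E (phi n)) dT.
Proof.
move=> H n.
suff : forall j (e1 : s (phi n) = j) (x : E j) J (e2 : s j = J),
   ecast E e2 (delta j x) = 0 <-> exists y, ecast E e1 (delta (phi n) y) = x.
  by move=> K x; exact: (K _ (e n) x _ (e (n + 1))).
move=> j e1; case: j / e1 => x J e2 /=. rewrite ecast0. exact: H.
Qed.

Lemma transfer_tens (Y : lmodType R^c) :
  (forall m (t : seq (Y * E (s m))), tens_eq (tens_map (delta (s m)) t) [::] <->
      exists u, tens_eq (tens_map (delta m) u) t) ->
  tensor_exact (C := fun n => E (phi n)) Y dT.
Proof.
move=> H n.
suff : forall j (e1 : s (phi n) = j) (t : seq (Y * E j)) J (e2 : s j = J),
   tens_eq (tens_map (fun x => ecast E e2 (delta j x)) t) [::] <->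
   exists u, tens_eq (tens_map (fun x => ecast E e1 (delta (phi n) x)) u) t.
  by move=> K x; exact: (K _ (e n) x _ (e (n + 1))).
move=> j e1; case: j / e1 => t J e2 /=. rewrite tens_ecast.
have -> : (fun x => ecast E (erefl (s (phi n))) (delta (phi n) x)) = delta (phi n) by [].
exact: H.
Qed.
End Transfer.
End Gen.
Arguments ecast {R} E {i j} e x.
Arguments ecast_lin {R} E {i j} e.
Arguments ecastL {R} E {i j} e.
Arguments ecast0 {R} E {i j} e x.


Section Build.
Variable R : pzRingType.
Variables (Yc : lmodType R^c -> Prop) (P Q : lmodType R -> Prop).
Hypothesis HQ : forall M, Q M -> Right Yc P Q M /\ Left Yc P Q M.

Record rstep (M : lmodType R) := RStep {
  rG : lmodType R; rN : lmodType R; rf : {linear M -> rG}; rg : {linear rG -> rN};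
  rpure : pSES Yc rf rg; rPG : P rG; rQN : Q rN }.
Record lstep (M : lmodType R) := LStep {
  lK : lmodType R; lG : lmodType R; lf : {linear lK -> lG}; lg : {linear lG -> M};
  lpure : pSES Yc lf lg; lPG : P lG; lQK : Q lK }.
Record qmod := QMod { qm : lmodType R; qmQ : Q qm }.

Lemma rex (M : lmodType R) (QM : Q M) : exists r : rstep M, True.
Proof. have [[G [N [f [g [H1 H2 H3]]]]] _] := HQ QM. by exists (RStep H1 H2 H3). Qed.
Lemma lex (M : lmodType R) (QM : Q M) : exists r : lstep M, True.
Proof. have [_ [K [G [f [g [H1 H2 H3]]]]]] := HQ QM. by exists (LStep H1 H2 H3). Qed.
Definition rnext (M : lmodType R) (QM : Q M) : rstep M := proj1_sig (constructive_indefinite_description _ (rex QM)).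
Definition lnext (M : lmodType R) (QM : Q M) : lstep M := proj1_sig (constructive_indefinite_description _ (lex QM)).

Variables (M : lmodType R) (QM : Q M).
Fixpoint rseq (k : nat) : qmod :=
  match k with 0 => QMod QM | k.+1 => let x := rseq k in QMod (rQN (rnext (qmQ x))) end.
Fixpoint lseq (k : nat) : qmod :=
  match k with 0 => QMod QM | k.+1 => let x := lseq k in QMod (lQK (lnext (qmQ x))) end.
Definition RS k := rnext (qmQ (rseq k)).
Definition LS k := lnext (qmQ (lseq k)).

Definition Eb (n : int) : lmodType R := match n with Posz k => rG (RS k) | Negz k => lG (LS k) end.
Definition sc (n : int) : int := match n with Posz k => Posz k.+1 | Negz 0 => Posz 0 | Negz k.+1 => Negz k end.
Definition db (n : int) : {linear Eb n -> Eb (sc n)} :=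
  match n as n return {linear Eb n -> Eb (sc n)} with
  | Posz k => lcomp (rf (RS k.+1)) (rg (RS k))
  | Negz 0 => lcomp (rf (RS 0)) (lg (LS 0))
  | Negz k.+1 => lcomp (lf (LS k)) (lg (LS k.+1))
  end.
Lemma esc (n : int) : sc (id n) = id (n + 1).
Proof.
case: n => [k|[|k]] //=. by rewrite -[1]/(Posz 1) -PoszD addn1.
rewrite !NegzE. rewrite -[k.+2]addn1 PoszD opprD addrK. done.
Qed.

Lemma db_exact m (x : Eb (sc m)) : db (sc m) x = 0 <-> exists y, db m y = x.
Proof.
case: m x => [k|[|k]] x.
- have [[_ s1 _] _] := rpure (RS k). have [[_ _ e2] _] := rpure (RS k.+1).
  have [[i3 _ _] _] := rpure (RS k.+2).
  exact: (splice_ex s1 e2 i3).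
- have [[_ s1 _] _] := lpure (LS 0). have [[_ _ e2] _] := rpure (RS 0).
  have [[i3 _ _] _] := rpure (RS 1).
  exact: (splice_ex s1 e2 i3).
- case: k x => [|k] x.
  + have [[_ s1 _] _] := lpure (LS 1). have [[_ _ e2] _] := lpure (LS 0).
    have [[i3 _ _] _] := rpure (RS 0).
    exact: (splice_ex s1 e2 i3).
  + have [[_ s1 _] _] := lpure (LS k.+2). have [[_ _ e2] _] := lpure (LS k.+1).
    have [[i3 _ _] _] := lpure (LS k).
    exact: (splice_ex s1 e2 i3).
Qed.

Lemma db_tens Y (YY : Yc Y) m (t : seq (Y * Eb (sc m))) :
  tens_eq (tens_map (db (sc m)) t) [::] <-> exists u, tens_eq (tens_map (db m) u) t.
Proof.
case: m t => [k|[|k]] t.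
- have [[_ s1 _] _] := rpure (RS k). have [[_ s2 e2] _] := rpure (RS k.+1).
  have [_ i3] := rpure (RS k.+2).
  exact: (splice_tens s1 s2 e2 (i3 Y YY)).
- have [[_ s1 _] _] := lpure (LS 0). have [[_ s2 e2] _] := rpure (RS 0).
  have [_ i3] := rpure (RS 1).
  exact: (splice_tens s1 s2 e2 (i3 Y YY)).
- case: k t => [|k] t.
  + have [[_ s1 _] _] := lpure (LS 1). have [[_ s2 e2] _] := lpure (LS 0).
    have [_ i3] := rpure (RS 0).
    exact: (splice_tens s1 s2 e2 (i3 Y YY)).
  + have [[_ s1 _] _] := lpure (LS k.+2). have [[_ s2 e2] _] := lpure (LS k.+1).
    have [_ i3] := lpure (LS k).
    exact: (splice_tens s1 s2 e2 (i3 Y YY)).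
Qed.

Lemma build_GF : GF_of P Yc M.
Proof.
exists (fun n => Eb (id n)), (dT db esc).
split.
- case=> k /=; [exact: rPG | exact: lPG].
- apply: transfer_exact; exact: db_exact.
- move=> Y YY; apply: transfer_tens; exact: db_tens.
- exists (rf (RS 0)). have [[i0 _ e0] _] := rpure (RS 0). split => // x.
  rewrite /dT lcompE ecast0 /=. rewrite -(e0 x).
  have [[i1 _ _] _] := rpure (RS 1).
  split => [H|->]; last exact: linear0.
  apply: i1. by rewrite H linear0.
Qed.
End Build.


Section Ker.
Variable (R : pzRingType) (U V : lmodType R) (h : {linear U -> V}).
Definition kerP (x : U) : Prop := h x = 0.
Lemma kerP0 : kerP 0. Proof. exact: linear0. Qed.
Lemma kerPB x y : kerP x -> kerP y -> kerP (x - y).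
Proof. by rewrite /kerP linearB /= => -> ->; rewrite subrr. Qed.
Lemma kerPZ (a : R) x : SubGrp kerP0 kerPB x -> SubGrp kerP0 kerPB (a *: x).
Proof. by rewrite /= /kerP linearZ /= => ->; rewrite scaler0. Qed.
Definition kersub : submod U := SubMod kerPZ.
End Ker.

Section KerPure.
Variable (R : pzRingType) (Y : lmodType R^c).
Variables (U0 U1 K U2 : lmodType R) (a : {linear U0 -> U1}) (k : {linear U1 -> K}) (i : {linear K -> U2}).
Hypothesis ksurj : forall z, exists y, k y = z.
Hypothesis ka : forall v, k (a v) = 0.
Hypothesis tex : forall u : seq (Y * U1), tens_eq (tens_map (fun y => i (k y)) u) [::] ->
  exists v, tens_eq (tens_map a v) u.
Lemma ker_pure (s : seq (Y * K)) : tens_eq (tens_map i s) [::] -> tens_eq s [::].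
Proof.
have [u <-] := tens_surj (Y:=Y) ksurj s.
rewrite tens_map_comp => /tex [v Hv].
apply: te_trans (te_sym (te_map k Hv)) _.
rewrite tens_map_comp; apply: te_zero_map => m /=; exact: ka.
Qed.
End KerPure.

Section Extract.
Variable R : pzRingType.
Variables (Yc : lmodType R^c -> Prop) (P : lmodType R -> Prop).

Lemma eshift (k n : int) : n + k + 1 = (n + 1) + k.
Proof. by rewrite addrAC. Qed.

Lemma ecast_inj (E : int -> lmodType R) i j (e : i = j) (x y : E i) : ecast E e x = ecast E e y -> x = y.
Proof. by case: j / e. Qed.

Lemma shift_GF (C : int -> lmodType R) (d : forall n : int, {linear C n -> C (n + 1)})
  (HP : forall n, P (C n)) (Hex : complex_exact d) (Ht : Ytensor_exact Yc d)
  (k : int) (K : lmodType R) (i : {linear K -> C k}) (ii : injective i)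
  (ik : forall x : C k, d k x = 0 <-> exists z, i z = x) : GF_of P Yc K.
Proof.
exists (fun n => C (n + k)), (dT (s := fun m => m + 1) d (eshift k)).
split.
- by move=> n; apply: HP.
- by apply: transfer_exact => m x; apply: Hex.
- by move=> Y YY; apply: transfer_tens => m t; apply: Ht.
have e0 : k = 0 + k by rewrite add0r.
exists (lcomp (ecastL C e0) i). split.
- by move=> x y /= /ecast_inj /ii.
- suff : forall j (ej : k = j) (x : C j) J (e2 : j + 1 = J),
     ecast C e2 (d j x) = 0 <-> exists z, ecast C ej (i z) = x.
    by move=> H x; exact: (H _ e0 x _ (eshift k 0)).
  move=> j ej; case: j / ej => x J e2 /=. rewrite ecast0. exact: ik.
Qed.

Variable M : lmodType R.
Local Unset Implicit Arguments.
Variables (C : int -> lmodType R) (d : forall n : int, {linear C n -> C (n + 1)}).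
Hypotheses (HP : forall n, P (C n)) (Hex : complex_exact d) (Ht : Ytensor_exact Yc d).
Variables (f : {linear M -> C 0}) (fi : injective f) (fk : forall x : C 0, d 0 x = 0 <-> exists m, f m = x).
Local Set Implicit Arguments.

Lemma comp0 n y : d (n + 1) (d n y) = 0.
Proof. exact: (proj2 (Hex n (d n y)) (ex_intro _ y erefl)). Qed.

Lemma hex (y : C (-1)) : exists m, f m = d (-1) y.
Proof. apply/fk. exact (@comp0 (-1) y). Qed.
Definition hh (y : C (-1)) : M := proj1_sig (constructive_indefinite_description _ (hex y)).
Lemma hhE y : f (hh y) = d (-1) y.
Proof. rewrite /hh; by case: constructive_indefinite_description. Qed.
Lemma hh_lin : linear hh.
Proof. move=> a x y; apply: fi; by rewrite linearP /= !hhE linearP. Qed.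
Definition hL : {linear C (-1) -> M} := mkLin hh_lin.
Lemma hL_surj m : exists y, hL y = m.
Proof.
have [y Hy] : exists y, d (-1) y = f m.
  apply/(Hex (-1)). have [_ ->] := fk (f m); last by exists m. done.
by exists y; apply: fi; rewrite /= hhE.
Qed.

Lemma extract_right : Right Yc P (GF_of P Yc) M.
Proof.
pose N := ssub (kersub (d (0 + 1))).
have gP : forall x : C 0, kersub (d (0 + 1)) (d 0 x) by move=> x; exact: (@comp0 _ x).
pose g (x : C 0) : N := ssin (gP x).
have gl : linear g by move=> a x y; apply: val_inj; rewrite /= linearP.
exists (C 0), N, f, (mkLin gl). split => //.
split; first split => //.
- move=> z. have := pbE (valP z). rewrite /= /kerP => /(Hex 0) [y Hy].
  by exists y; apply: val_inj.
- move=> b. rewrite -fk. split => [H|H]. exact: (f_equal val H). by apply: val_inj.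
- move=> Y YY. apply: (@ker_pure _ Y (C (-2)) (C (-1)) M (C 0) (d (-2)) hL f hL_surj).
  + move=> v; apply: fi; rewrite /= hhE linear0. exact (@comp0 (-2) v).
  + move=> u Hu. apply/(Ht Y YY (-2)).
    by rewrite (tens_map_ext (e := fun y => f (hh y))) // => y; rewrite hhE.
- apply: (@shift_GF C d HP Hex Ht (0 + 1) N (ssval _)); first exact: ssval_inj.
  move=> x; exact (@ssval_im _ _ (kersub (d (0 + 1))) x).
Qed.

Lemma extract_left : Left Yc P (GF_of P Yc) M.
Proof.
pose K := ssub (kersub (d (-1))).
have kP : forall y : C (-2), kersub (d (-1)) (d (-2) y) by move=> y; exact (@comp0 (-2) y).
pose k (y : C (-2)) : K := ssin (kP y).
have kl : linear k by move=> a x y; apply: val_inj; rewrite /= linearP.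
exists K, (C (-1)), (ssval _), hL. split => //.
split; first split.
- exact: ssval_inj.
- exact: hL_surj.
- move=> b. rewrite -ssval_im /= /kerP -hhE. split => [->|H]; first exact: linear0.
  by apply: fi; rewrite H linear0.
- move=> Y YY. apply: (@ker_pure _ Y (C (-3)) (C (-2)) K (C (-1)) (d (-3)) (mkLin kl) (ssval _)).
  + move=> z. have := pbE (valP z). rewrite /= /kerP => /(Hex (-2)) [y Hy].
    by exists y; apply: val_inj.
  + move=> v; apply: val_inj. exact (@comp0 (-3) v).
  + move=> u Hu. by apply/(Ht Y YY (-3)).
- apply: (@shift_GF C d HP Hex Ht (-1) K (ssval _)); first exact: ssval_inj.
  move=> x; exact (@ssval_im _ _ (kersub (d (-1))) x).
Qed.
End Extract.

Lemma extract (R : pzRingType) Yc (P : lmodType R -> Prop) M :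
  GF_of P Yc M -> Right Yc P (GF_of P Yc) M /\ Left Yc P (GF_of P Yc) M.
Proof.
move=> [C [d [HP Hex Ht [f [fi fk]]]]].
split; [exact: (extract_right HP Hex Ht fi fk) | exact: (extract_left HP Hex Ht fi fk)].
Qed.

Lemma fold_GF (R : pzRingType) Yc (P : lmodType R -> Prop) M :
  Right Yc P (GF_of P Yc) M -> Left Yc P (GF_of P Yc) M -> GF_of P Yc M.
Proof.
move=> HR HL.
pose Q := fun N => GF_of P Yc N \/ (Right Yc P (GF_of P Yc) N /\ Left Yc P (GF_of P Yc) N).
have mono : forall N, GF_of P Yc N -> Q N by move=> N H; left.
have HQ : forall N, Q N -> Right Yc P Q N /\ Left Yc P Q N.
  move=> N HN.
  have [[G [N' [f [g [H1 H2 H3]]]]] [K [G' [f' [g' [H1' H2' H3']]]]]] :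
     Right Yc P (GF_of P Yc) N /\ Left Yc P (GF_of P Yc) N.
    by case: HN => [/extract|].
  split; [exists G, N', f, g; split => //; exact: mono | exists K, G', f', g'; split => //; exact: mono].
exact: (@build_GF R Yc P Q HQ M (or_intror (conj HR HL))).
Qed.


Lemma odd_abs_succ (n : int) : odd (absz (n + 1)) = ~~ odd (absz n).
Proof.
case: n => [k|k].
- rewrite -[1]/(Posz 1) -PoszD /= addn1 /=. done.
- have -> : Negz k + 1 = - (Posz k). by rewrite NegzE -[k.+1]addn1 PoszD opprD addrNK.
  by rewrite abszN /= negbK.
Qed.

Section XGF.
Variable R : pzRingType.
Variables (Xc : lmodType R -> Prop) (Yc : lmodType R^c -> Prop).

Lemma id_lin (X : lmodType R) : linear (fun x : X => x). Proof. by []. Qed.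
Lemma zero_lin (X : lmodType R) : linear (fun x : X => (0 : X)). Proof. by move=> a x y; rewrite scaler0 addr0. Qed.

Lemma X_GF (X : lmodType R) : Xc X -> GF Xc Yc X.
Proof.
move=> HX.
pose d (n : int) : {linear X -> X} := if odd (absz n) then mkLin (@id_lin X) else mkLin (@zero_lin X).
exists (fun _ => X), d. split => //.
- move=> n x. rewrite /d odd_abs_succ. case: (odd _) => /=.
  + by split => // _; exists x.
  + split => [->|[y <-]] //; by exists 0.
- move=> Y YY n t. rewrite /d odd_abs_succ. case: (odd _) => /=.
  + split => [_|]; last by move=> _; apply: te_zero_map.
    by exists t; rewrite tens_map_id.
  + rewrite tens_map_id. split => [H|[s Hs]].
    * exists [::]. apply: te_trans _ (te_sym H). by [].
    * apply: te_trans (te_sym Hs) _. by apply: te_zero_map.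
- exists (mkLin (@id_lin X)). split => // x. rewrite /d /=. by split => // _; exists x.
Qed.
End XGF.

Section QLift.
Variable (R : pzRingType) (V W : lmodType R) (S : submod V) (phi : {linear V -> W}).
Hypothesis phiS : forall v, S v -> phi v = 0.
Definition qlift_fun (q : lquot S) : W := phi (val q).
Lemma qlift_pi v : qlift_fun (lpi S v) = phi v.
Proof.
rewrite /qlift_fun /=. apply/eqP; rewrite -subr_eq0 -linearB; apply/eqP; apply: phiS.
rewrite -opprB. apply: SN. exact: zrepP.
Qed.
Lemma qlift_lin : linear qlift_fun.
Proof.
move=> a q r. have [x <-] := lpi_surj q. have [y <-] := lpi_surj r.
by rewrite -linearP !qlift_pi linearP.
Qed.
Definition qlift : {linear lquot S -> W} := mkLin qlift_lin.
Lemma qliftE v : qlift (lpi S v) = phi v. Proof. exact: qlift_pi. Qed.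
End QLift.

Section PO.
Variable R : pzRingType.
Variables (A B C : lmodType R) (a : {linear A -> B}) (h : {linear A -> C}).
Definition poP (p : (B * C)%type) : Prop := exists x, p = (a x, - h x).
Lemma poP0 : poP 0. Proof. exists 0. by rewrite !linear0 ?oppr0. Qed.
Lemma poPB p q : poP p -> poP q -> poP (p - q).
Proof. move=> [x ->] [y ->]; exists (x - y). by rewrite !linearB /=. Qed.
Lemma poPZ (r : R) p : SubGrp poP0 poPB p -> SubGrp poP0 poPB (r *: p).
Proof. move=> [x ->]; exists (r *: x). by rewrite !linearZ. Qed.
Definition posub : submod (B * C)%type := SubMod poPZ.
Definition PO := lquot posub.
Lemma inl_lin : linear (fun b : B => (b, 0 : C)). Proof. by move=> r x y; apply: injective_projections => /=; rewrite ?scaler0 ?addr0. Qed.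
Lemma inr_lin : linear (fun c : C => (0 : B, c)). Proof. by move=> r x y; apply: injective_projections => /=; rewrite ?scaler0 ?addr0. Qed.
Lemma fst_lin : linear (fun p : (B * C)%type => p.1). Proof. by []. Qed.
Lemma snd_lin : linear (fun p : (B * C)%type => p.2). Proof. by []. Qed.
Definition poB : {linear B -> PO} := lcomp (lpi posub) (mkLin inl_lin).
Definition poC : {linear C -> PO} := lcomp (lpi posub) (mkLin inr_lin).
Lemma po_eq0 b c : lpi posub (b, c) = 0 <-> exists x, b = a x /\ c = - h x.
Proof. rewrite lpi_eq0 /= /poP. split => [[x [-> ->]]|[x [-> ->]]]; by exists x. Qed.
Lemma po_split (q : PO) : exists b c, q = poB b + poC c.
Proof.
have [[b c] <-] := lpi_surj q. exists b, c. rewrite /poB /poC !lcompE -linearD.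
congr (lpi _ _); apply: injective_projections => /=; by rewrite ?addr0 ?add0r.
Qed.
Lemma po_comm x : poB (a x) = poC (h x).
Proof.
apply/eqP; rewrite -subr_eq0 /poB /poC !lcompE -linearB; apply/eqP.
have -> : mkLin inl_lin (a x) - mkLin inr_lin (h x) = (a x, - h x).
  apply: injective_projections => /=; by rewrite ?subr0 ?sub0r.
apply/po_eq0; by exists x.
Qed.

Section L1.
Variables (D : lmodType R) (k : {linear C -> D}).
Hypothesis Hs : SES h k.
Lemma kB_S (p : (B * C)%type) : posub p -> k p.2 = 0.
Proof. move=> [x ->] /=. rewrite linearN /=. have [_ _ e] := Hs. by rewrite (proj2 (e (h x))) ?oppr0 //; exists x. Qed.
Definition kB : {linear PO -> D} := qlift (phi := lcomp k (mkLin snd_lin)) kB_S.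
Lemma kB_poB b : kB (poB b) = 0.
Proof. by rewrite /kB /poB lcompE qliftE /= linear0. Qed.
Lemma kB_poC c : kB (poC c) = k c.
Proof. by rewrite /kB /poC lcompE qliftE. Qed.
Lemma po_SES_B : SES poB kB.
Proof.
have [hi ks he] := Hs.
split.
- move=> b b' E. apply/eqP; rewrite -subr_eq0; apply/eqP.
  have : poB (b - b') = 0 by rewrite linearB E subrr.
  rewrite /poB lcompE mkLinE => /po_eq0 [x [-> H]].
  have : h x = 0 by rewrite -[h x]opprK -H oppr0.
  rewrite -(linear0 h) => /hi ->. exact: linear0.
- move=> dd. have [c <-] := ks dd. exists (poC c). exact: kB_poC.
- move=> q. have [b [c ->]] := po_split q. rewrite linearD kB_poB kB_poC add0r.
  split => [/he [x <-]|[b' E]].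
  + exists (b + a x). by rewrite linearD po_comm.
  + have : kB (poB b' - poB b) = kB (poC c) by rewrite E addrC addKr.
    rewrite linearB !kB_poB kB_poC subrr. done.
Qed.
End L1.

Section L1'.
Variables (D : lmodType R) (l : {linear B -> D}).
Hypothesis Hs : SES a l.
Lemma lC_S (p : (B * C)%type) : posub p -> l p.1 = 0.
Proof. move=> [x ->] /=. have [_ _ e] := Hs. apply/(e (a x)); by exists x. Qed.
Definition lC : {linear PO -> D} := qlift (phi := lcomp l (mkLin fst_lin)) lC_S.
Lemma lC_poB b : lC (poB b) = l b.
Proof. by rewrite /lC /poB lcompE qliftE. Qed.
Lemma lC_poC c : lC (poC c) = 0.
Proof. by rewrite /lC /poC lcompE qliftE /= linear0. Qed.
Lemma po_SES_C : SES poC lC.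
Proof.
have [ai ls le] := Hs.
split.
- move=> c c' E. apply/eqP; rewrite -subr_eq0; apply/eqP.
  have : poC (c - c') = 0 by rewrite linearB E subrr.
  rewrite /poC lcompE mkLinE => /po_eq0 [x [H ->]].
  have : a x = 0 by rewrite H.
  rewrite -(linear0 a) => /ai ->. by rewrite linear0 oppr0.
- move=> dd. have [b <-] := ls dd. exists (poB b). exact: lC_poB.
- move=> q. have [b [c ->]] := po_split q. rewrite linearD lC_poB lC_poC addr0.
  split => [/le [x <-]|[c' E]].
  + exists (h x + c). by rewrite linearD po_comm.
  + have : lC (poC c' - poC c) = lC (poB b) by rewrite E addrK.
    rewrite linearB !lC_poC lC_poB subrr. done.
Qed.
End L1'.

Lemma po_tinj (Yc : lmodType R^c -> Prop) : tinj Yc h -> tinj Yc poB.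
Proof.
move=> ht Y YY t.
have pl : linear (fun x : A => (a x, - h x)).
  by move=> r x y; apply: injective_projections => /=; rewrite linearP // opprD scalerN.
have sur : forall q : PO, exists p, lpi posub p = q by exact: lpi_surj.
have ker : forall p, lpi posub p = 0 -> exists x, mkLin pl x = p.
  move=> [b c] /po_eq0 [x [-> ->]]. by exists x.
rewrite (tens_map_ext (e := fun b => lpi posub (b, 0))) // -(tens_map_comp (fun b : B => (b, 0 : C))).
move=> /(tens_rexact sur ker) [s Hs].
have H2 := te_map (mkLin snd_lin) Hs. rewrite !tens_map_comp /= in H2.
have H1 := te_map (mkLin fst_lin) Hs. rewrite !tens_map_comp /= in H1.
have hs : tens_eq (tens_map h s) [::].
  have H3 : tens_eq (tens_map (fun x => - h x) s) [::].
    apply: te_trans H2 _. by apply: te_zero_map.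
  have ol : linear (fun c : C => - c) by move=> r u v; rewrite opprD scalerN.
  have H4 := te_mapf ol H3. rewrite tens_map_comp /= in H4.
  apply: te_trans _ H4. rewrite (tens_map_ext (e := h)) //= => x. exact: opprK.
have s0 := ht Y YY s hs.
have H1' : tens_eq (tens_map a s) (tens_map id t) := H1.
rewrite tens_map_id in H1'. apply: te_trans (te_sym H1') _.
by apply: te_trans (te_map a s0) _.
Qed.

Lemma po_surjB : (forall c, exists x, h x = c) -> forall q : PO, exists b, poB b = q.
Proof.
move=> hs q. have [b [c ->]] := po_split q. have [x <-] := hs c.
exists (b + a x). by rewrite linearD po_comm.
Qed.
Lemma po_kerB b : poB b = 0 <-> exists x, b = a x /\ h x = 0.
Proof.
rewrite /poB lcompE mkLinE po_eq0. split => [[x [-> H]]|[x [-> H]]]; exists x; split => //.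
  by rewrite -[h x]opprK -H oppr0.
by rewrite H oppr0.
Qed.
End PO.

Lemma tinj_comp (R : pzRingType) Yc (A B C : lmodType R) (f : {linear A -> B}) (g : {linear B -> C}) :
  tinj Yc f -> tinj Yc g -> tinj Yc (fun x => g (f x)).
Proof. move=> hf hg Y YY s. rewrite -tens_map_comp => /(hg Y YY) /(hf Y YY). done. Qed.

Lemma tinj_compl (R : pzRingType) Yc (A B C : lmodType R) (f : {linear A -> B}) (g : {linear B -> C}) :
  tinj Yc (fun x => g (f x)) -> tinj Yc f.
Proof. move=> hgf Y YY s H. apply: (hgf Y YY). rewrite -tens_map_comp. exact: (te_map g H). Qed.

Section PB.
Variable R : pzRingType.
Variables (X K G : lmodType R) (dl : {linear X -> G}) (al : {linear K -> G}).
Definition pbPr (p : (X * K)%type) : Prop := dl p.1 = al p.2.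
Lemma pbP0 : pbPr 0. Proof. by rewrite /pbPr /= !linear0. Qed.
Lemma pbPB p q : pbPr p -> pbPr q -> pbPr (p - q).
Proof. rewrite /pbPr /= => H1 H2. by rewrite !linearB /= H1 H2. Qed.
Lemma pbPZ (r : R) p : SubGrp pbP0 pbPB p -> SubGrp pbP0 pbPB (r *: p).
Proof. rewrite /= /pbPr /= => H. by rewrite !linearZ /= H. Qed.
Definition pbsub : submod (X * K)%type := SubMod pbPZ.
Definition PB := ssub pbsub.
Lemma pfst_lin : linear (fun p : (X * K)%type => p.1). Proof. by []. Qed.
Lemma psnd_lin : linear (fun p : (X * K)%type => p.2). Proof. by []. Qed.
Definition pbX : {linear PB -> X} := lcomp (mkLin pfst_lin) (ssval pbsub).
Definition pbK : {linear PB -> K} := lcomp (mkLin psnd_lin) (ssval pbsub).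
Lemma pbXK (z : PB) : dl (pbX z) = al (pbK z).
Proof. exact: (pbE (valP z)). Qed.
Definition pbin x k (H : dl x = al k) : PB := ssin (S := pbsub) (x := (x, k)) H.
Lemma pb_ext (z z' : PB) : pbX z = pbX z' -> pbK z = pbK z' -> z = z'.
Proof. move=> H1 H2; apply: val_inj. exact: injective_projections. Qed.

Section PBK.
Variables (L : lmodType R) (g : {linear L -> X}).
Hypothesis Hs : SES g dl.
Lemma jX_P (l : L) : dl (g l) = al 0.
Proof. have [_ _ e] := Hs. rewrite linear0. apply/(e (g l)). by exists l. Qed.
Definition jX_fun (l : L) : PB := pbin (jX_P l).
Lemma jX_lin : linear jX_fun.
Proof. move=> r x y. apply: pb_ext => /=; by rewrite ?linearP // scaler0 addr0. Qed.
Definition jX : {linear L -> PB} := mkLin jX_lin.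
Lemma pbX_jX l : pbX (jX l) = g l. Proof. by []. Qed.
Lemma PB_SES_K : SES jX pbK.
Proof.
have [gi ds de] := Hs.
split.
- move=> l l' E. apply: gi. exact: (f_equal pbX E).
- move=> k. have [x Hx] := ds (al k). exists (pbin Hx). by [].
- move=> z. split => [H|[l <-]] //.
  have : dl (pbX z) = 0 by rewrite pbXK H linear0.
  move/de => [l Hl]. exists l. by apply: pb_ext => //=; rewrite H.
Qed.
End PBK.

Section PBX.
Variables (N : lmodType R) (nu : {linear N -> K}).
Hypothesis Hs : SES nu al.
Lemma jK_P (n : N) : dl 0 = al (nu n).
Proof. have [_ _ e] := Hs. rewrite linear0. symmetry. apply/(e (nu n)). by exists n. Qed.
Definition jK_fun (n : N) : PB := pbin (jK_P n).
Lemma jK_lin : linear jK_fun.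
Proof. move=> r x y. apply: pb_ext => /=; by rewrite ?linearP // scaler0 addr0. Qed.
Definition jK : {linear N -> PB} := mkLin jK_lin.
Lemma PB_SES_X : SES jK pbX.
Proof.
have [ni als ale] := Hs.
split.
- move=> l l' E. apply: ni. exact: (f_equal pbK E).
- move=> x. have [k Hk] := als (dl x). exists (pbin (esym Hk)). by [].
- move=> z. split => [H|[l <-]] //.
  have : al (pbK z) = 0 by rewrite -pbXK H linear0.
  move/ale => [l Hl]. exists l. by apply: pb_ext => //=; rewrite H.
Qed.
End PBX.

Lemma pbX_inj : injective al -> injective pbX.
Proof.
move=> ai z z' E. apply: pb_ext => //. apply: ai. by rewrite -!pbXK E.
Qed.

Lemma PB_SES_Z (M : lmodType R) (be : {linear G -> M}) :
  SES al be -> (forall g, exists x, dl x = g) -> SES pbX (lcomp be dl).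
Proof.
move=> [ai bs be0] ds. split.
- exact: pbX_inj.
- move=> m. have [g <-] := bs m. have [x <-] := ds g. by exists x.
- move=> x. rewrite lcompE be0. split => [[k Hk]|[z <-]].
  + exists (pbin (esym Hk)). by [].
  + exists (pbK z). by rewrite pbXK.
Qed.

Lemma PB_tinj (Yc : lmodType R^c -> Prop) (L : lmodType R) (g : {linear L -> X}) :
  SES g dl -> tinj Yc g -> tinj Yc al -> tinj Yc pbX.
Proof.
move=> Hs gt alt Y YY s H.
have [_ ks ke] := PB_SES_K Hs.
have H1 : tens_eq (tens_map pbK s) [::].
  apply: (alt Y YY). rewrite tens_map_comp.
  rewrite (tens_map_ext (e := fun z => dl (pbX z))); last by move=> z; rewrite /= pbXK.
  rewrite -tens_map_comp. exact: (te_map dl H).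
have [u Hu] := tens_rexact ks (fun b Hb => proj1 (ke b) Hb) H1.
have Hu' := te_map pbX Hu. rewrite tens_map_comp in Hu'.
have u0 : tens_eq u [::].
  apply: (gt Y YY). apply: te_trans _ (te_trans Hu' H). by [].
apply: te_trans (te_sym Hu) _. exact: (te_map (jX Hs) u0).
Qed.
End PB.


Section Main.
Variable R : pzRingType.
Variables (Xc : lmodType R -> Prop) (Yc : lmodType R^c -> Prop).
Hypothesis Hext : closed_under_extensions (GF Xc Yc).
Local Notation GFX := (GF Xc Yc).
Local Notation GF2' := (GF_of (GF Xc Yc) Yc).

Lemma ext_SES (A B C : lmodType R) (f : {linear A -> B}) (g : {linear B -> C}) :
  SES f g -> GFX A -> GFX C -> GFX B.
Proof. move=> [fi gs ge]. exact: Hext fi gs ge. Qed.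

Lemma right_step M : GF2' M -> Right Yc Xc GF2' M.
Proof.
move=> HM.
have [[G [N [aM [b [[Sab tab] HG HN]]]]] _] := extract HM.
have [[X [L [c [e [[Sce tce] HX HL]]]]] _] := extract HG.
have [[G' [N' [h' [k [[Shk thk] HG' HN']]]]] _] := extract HN.
have [ai bs be] := Sab. have [ci es ee] := Sce.
pose P := PO c b.
have S1 : SES (poC c b) (lC b Sce) := po_SES_C b Sce.
have S2 : SES (lcomp c aM) (poB c b).
  split.
  - by move=> x y /= /ci /ai.
  - exact: po_surjB.
  - move=> x. rewrite po_kerB. split => [[y [-> /be [m <-]]]|[m <-]].
    + by exists m.
    + exists (aM m). split => //. apply/be. by exists m.
have t2 : tinj Yc (lcomp c aM) := tinj_comp tab tce.
pose Q' := PO (poC c b) h'.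
have S3 : SES (poB (poC c b) h') (kB (poC c b) Shk) := po_SES_B (poC c b) Shk.
have t3 : tinj Yc (poB (poC c b) h') := po_tinj (a := poC c b) thk.
have S4 : SES (poC (poC c b) h') (lC h' S1) := po_SES_C h' S1.
have HQ' : GFX Q' := ext_SES S4 HG' HL.
have HP : GF2' P.
  apply: fold_GF.
  - exists Q', N', (poB (poC c b) h'), (kB (poC c b) Shk). by split.
  - exists M, X, (lcomp c aM), (poB c b). split => //. exact: X_GF.
exists X, P, (lcomp c aM), (poB c b). by split.
Qed.

Lemma left_step M : GF2' M -> Left Yc Xc GF2' M.
Proof.
move=> HM.
have [_ [K [G [al [be [[Sab tab] HG HK]]]]]] := extract HM.
have [_ [L [X [ga [dl [[Sgd tgd] HX HL]]]]]] := extract HG.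
have [_ [K' [G' [ka [la [[Skl tkl] HG' HK']]]]]] := extract HK.
have [ai bs be0] := Sab. have [gi ds de] := Sgd.
pose Z := PB dl al.
have S1 : SES (pbX dl al) (lcomp be dl) := PB_SES_Z Sab ds.
have t1 : tinj Yc (pbX dl al) := PB_tinj Sgd tgd tab.
pose W := PB la (pbK dl al).
have S2 : SES (jX (pbK dl al) Skl) (pbK la (pbK dl al)) := PB_SES_K (pbK dl al) Skl.
have t2 : tinj Yc (jX (pbK dl al) Skl).
  apply: (tinj_compl (g := pbX la (pbK dl al))). exact: tkl.
have S3 : SES (jX al Sgd) (pbK dl al) := PB_SES_K al Sgd.
have S4 : SES (jK la S3) (pbX la (pbK dl al)) := PB_SES_X la S3.
have HW : GFX W := ext_SES S4 HL HG'.
have HZ : GF2' Z.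
  apply: fold_GF.
  - exists X, M, (pbX dl al), (lcomp be dl). split => //. exact: X_GF.
  - exists K', W, (jX (pbK dl al) Skl), (pbK la (pbK dl al)). by split.
exists Z, X, (pbX dl al), (lcomp be dl). by split.
Qed.

Theorem main M : GFX M <-> GF2' M.
Proof.
split.
- move=> [C [d [HP Hex Ht Hf]]]. exists C, d. split => // n. exact: X_GF.
- move=> HM. apply: (@build_GF R Yc Xc GF2') => //.
  move=> N HN. split; [exact: right_step | exact: left_step].
Qed.
End Main.


Theorem theorem2p1 (R : pzRingType) (Xc : lmodType R -> Prop)
    (Yc : lmodType R^c -> Prop) :
  closed_under_extensions (GF Xc Yc) ->
  forall M : lmodType R, GF Xc Yc M <-> GF2 Xc Yc M.
Proof.
move=> H M. exact: (main H M).
Qed.
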